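(* Let $A=\{a,b,c\}$, $\Lambda=\{ab^ic\mid i\geq 1\}$ and $\mathcal{T}_2=\{((ab^ic)^2,\varepsilon)\mid i\ge 1\}$. If $u\in A^\ast$ is $\mathcal{T}_2$-irreducible and invertible in $\Pi_2=\langle a,b,c\mid (ab^ic)^2=1\ (i\geq 1)\rangle$, then $u\in\Lambda^\ast$.
   Context: A word $u$ is $\mathcal{T}_2$-irreducible if it contains no factor of the form $(ab^ic)^2$ with $i\ge1$. A word is invertible in $\Pi_2$ if it represents a unit of $\Pi_2$. $\Lambda^\ast$ is the set of finite concatenations of words from $\Lambda$. *)

(* Defs.v *)
From mathcomp Require Import all_boot.
From Stdlib Require Import Relations.Relation_Operators.
Set Implicit Arguments. Unset Strict Implicit. Unset Printing Implicit Defensive.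

Inductive letter : Type := La | Lb | Lc.

Definition word := seq letter.

Definition lam (i : nat) : word := La :: nseq i Lb ++ [:: Lc].

Definition relw (i : nat) : word := lam i ++ lam i.

Inductive T2step : word -> word -> Prop :=
| T2step_intro (p q : word) (i : nat) :
    1 <= i -> T2step (p ++ relw i ++ q) (p ++ q).

(* the congruence on A^* generated by T_2; A^*/~ is the monoid Pi_2 *)
Definition Pi2_eq : word -> word -> Prop := clos_refl_sym_trans word T2step.

Definition invertible_Pi2 (u : word) : Prop :=
  exists v : word, Pi2_eq (u ++ v) [::] /\ Pi2_eq (v ++ u) [::].

Definition T2_irreducible (u : word) : Prop :=
  ~ exists (p q : word) (i : nat), 1 <= i /\ u = p ++ relw i ++ q.

Definition in_Lambda_star (u : word) : Prop :=
  exists ns : seq nat, all (fun i => 0 < i) ns /\ u = flatten (map lam ns).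

(* Main.v *)
Require Import Defs.
From mathcomp Require Import all_boot.
From mathcomp Require Import zify.
From Stdlib Require Import Relations.Relation_Operators.
Set Implicit Arguments. Unset Strict Implicit.

Inductive Xs : word -> Prop :=
| X0 : Xs [::]
| Xlam i w : 0 < i -> Xs w -> Xs (lam i ++ w)
| Xab k w : Xs w -> Xs (La :: nseq k Lb ++ w).

Inductive Ys : word -> Prop :=
| Y0 : Ys [::]
| Ylam i w : 0 < i -> Ys w -> Ys (lam i ++ w)
| Ybc k w : Ys w -> Ys (nseq k Lb ++ Lc :: w).

Lemma Xs_cat x y : Xs x -> Xs y -> Xs (x ++ y).
Proof.
elim=> [//|i w Hi Hw IH|k w Hw IH] Hy.
- rewrite -catA; exact: Xlam Hi (IH Hy).
- rewrite /= -catA; exact: Xab (IH Hy).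
Qed.

Lemma Ys_cat x y : Ys x -> Ys y -> Ys (x ++ y).
Proof.
elim=> [//|i w Hi Hw IH|k w Hw IH] Hy.
- rewrite -catA; exact: Ylam Hi (IH Hy).
- rewrite -catA /=; exact: Ybc (IH Hy).
Qed.

Lemma cat_split (x y z w : word) :
  x ++ y = z ++ w -> size x <= size z -> exists m, z = x ++ m /\ y = m ++ w.
Proof.
elim: x z => [|a x IH] z E H.
- by exists z.
- case: z E H => [|b z] //= [-> E] H.
  have [m [-> ->]] := IH z E H. by exists m.
Qed.

Lemma nseq_inj i j s t :
  nseq i Lb ++ Lc :: s = nseq j Lb ++ Lc :: t -> i = j /\ s = t.
Proof.
elim: i j => [|i IH] [|j] /=.
- by case=> ->.
- by case.
- by case.
- by case=> /IH [-> ->].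
Qed.

Lemma lam_inj i j s t : lam i ++ s = lam j ++ t -> i = j /\ s = t.
Proof.
rewrite /lam /= => [[]]. rewrite -!catA /=. exact: nseq_inj.
Qed.

Lemma A' m s i s2 : m ++ La :: s = nseq i Lb ++ Lc :: s2 -> size m <= i -> False.
Proof.
elim: m i => [|x m IH] [|i] /=.
- by case.
- by case.
- by [].
- by case=> _ E H; apply: (IH i E H).
Qed.

Lemma A m j s i s' : m ++ lam j ++ s = lam i ++ s' -> size m < size (lam i) -> m = [::].
Proof.
case: m => [//|x m]. rewrite /lam /= => [[_ E]] H.
exfalso; apply: (@A' m (nseq j Lb ++ Lc :: s) i s').
- by move: E; rewrite -!catA /=.
- move: H; rewrite size_cat size_nseq /=. lia.
Qed.

Lemma Xs_take_lam i n : 0 < i -> Xs (take n (lam i)).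
Proof.
move=> Hi; case: n => [|n]; first by rewrite take0; constructor.
rewrite /lam /= take_cat size_nseq.
case: ltnP => H.
- rewrite take_nseq; last exact: ltnW.
  have := @Xab n [::] X0; by rewrite cats0.
- case: (n - i) => [|k].
  + rewrite take0; have := @Xab i [::] X0; by rewrite cats0.
  + rewrite /=. have := @Xlam i [::] Hi X0. by rewrite cats0.
Qed.

Lemma Xs_take_relw i n : 0 < i -> Xs (take n (relw i)).
Proof.
move=> Hi; rewrite /relw take_cat; case: ifP => _.
- exact: Xs_take_lam.
- apply: Xs_cat; last exact: Xs_take_lam.
  have := @Xlam i [::] Hi X0; by rewrite cats0.
Qed.

Inductive red : word -> word -> Prop :=
| red_refl w : red w w
| red_step w w' z : T2step w w' -> red w' z -> red w z.

Lemma inv_red u : T2_irreducible u -> forall w z, red w z -> z = [::] ->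
  forall r y t, u = r ++ y -> Xs y -> w = r ++ t -> Xs u.
Proof.
move=> Hirr w z; elim => {w z}.
- move=> w -> r y t Eu Hy Ew. case: r Ew Eu => // _ Eu. by rewrite Eu.
- move=> w w' z Hs Hr IH Ez r y t Eu Hy.
  case: Hs Hr IH => p q i Hi Hr IH Ew.
  case: (leqP (size r) (size p)) => H.
  + have [m [Ep _]] := cat_split (esym Ew) H.
    apply: (IH Ez r y (m ++ q)) Eu Hy _. by rewrite Ep -catA.
  + have [m [Er Em]] := cat_split Ew (ltnW H).
    case: (leqP (size m) (size (relw i))) => H2.
    * have [m2 [Er2 _]] := cat_split (esym Em) H2.
      have Hm : Xs m.
        have -> : m = take (size m) (relw i) by rewrite Er2 take_size_cat.
        exact: Xs_take_relw.
      apply: (IH Ez p (m ++ y) q) => //.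
      -- by rewrite Eu Er catA.
      -- exact: Xs_cat.
    * have [m3 [Em3 _]] := cat_split Em (ltnW H2).
      exfalso; apply: Hirr; exists p, (m3 ++ y), i; split => //.
      by rewrite Eu Er Em3 -!catA.
Qed.

Lemma size_relw i : size (relw i) = (size (lam i)) + size (lam i).
Proof. by rewrite /relw size_cat. Qed.

Lemma step_size w w' : T2step w w' -> size w' < size w.
Proof.
case=> p q i Hi. rewrite /relw /lam !size_cat /= !size_cat /=. lia.
Qed.

Lemma red_trans x y z : red x y -> red y z -> red x z.
Proof. elim=> // w w' z0 S _ IH H. exact: red_step S (IH H). Qed.

Lemma lc_aux p1 q1 p2 q2 i j : 1 <= i -> 1 <= j ->
  p1 ++ relw i ++ q1 = p2 ++ relw j ++ q2 -> size p1 <= size p2 ->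
  exists z, red (p1 ++ q1) z /\ red (p2 ++ q2) z.
Proof.
move=> Hi Hj E0 H.
have [m [Ep2 E]] := cat_split E0 H.
case: (leqP (size (relw i)) (size m)) => H2.
- have [m' [Em Eq1]] := cat_split E H2.
  exists (p1 ++ m' ++ q2); split.
  + apply: (red_step _ (red_refl _)). rewrite Eq1.
    have := T2step_intro (p1 ++ m') q2 Hj. by rewrite -!catA.
  + apply: (red_step _ (red_refl _)). rewrite Ep2 Em.
    have := T2step_intro p1 (m' ++ q2) Hi. by rewrite -!catA.
- move: E; rewrite /relw -!catA => E.
  case: (ltnP (size m) (size (lam i))) => H3.
  + have Em := A (esym E) H3. subst m.
    move: E => /= /lam_inj [Eij /lam_inj [_ Eq]]. subst.
    exists (p1 ++ q2); rewrite cats0; split; exact: red_refl.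
  + have [m'' [Em E']] := cat_split E H3.
    have Hm'' : size m'' < size (lam i).
      move: H2; rewrite size_relw Em size_cat. lia.
    have Em'' := A (esym E') Hm''. subst m''.
    move: E' => /= /lam_inj [Eij Eq]. subst.
    exists (p1 ++ lam j ++ q2); split; [exact: red_refl | rewrite cats0 -catA; exact: red_refl].
Qed.

Lemma lc w x y : T2step w x -> T2step w y -> exists z, red x z /\ red y z.
Proof.
move=> H1 H2; case: H1 H2 => p1 q1 i Hi H2.
move Ew: (p1 ++ relw i ++ q1) H2 => w0 H2; case: H2 Ew => p2 q2 j Hj Ew.
case: (leqP (size p1) (size p2)) => H.
- exact: lc_aux Hi Hj Ew H.
- have [z [A1 A2]] := lc_aux Hj Hi (esym Ew) (ltnW H). by exists z.
Qed.

Lemma confl n : forall w, size w < n -> forall x y, red w x -> red w y ->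
  exists z, red x z /\ red y z.
Proof.
elim: n => [//|n IH] w Hw x y Hx Hy.
case: Hx Hw Hy => [w0|w0 x1 x0 Sx Rx] Hw Hy.
- exists y; split; [exact: Hy | exact: red_refl].
- case: Hy Sx Rx Hw => [w1|w1 y1 y0 Sy Ry] Sx Rx Hw.
  + exists x0; split; [exact: red_refl | exact: red_step Sx Rx].
  + have [z0 [Hx0 Hy0]] := lc Sx Sy.
    have Hx1 : size x1 < n by have := step_size Sx; lia.
    have Hy1 : size y1 < n by have := step_size Sy; lia.
    have [z1 [B1 B2]] := IH x1 Hx1 x0 z0 Rx Hx0.
    have [z2 [B3 B4]] := IH y1 Hy1 y0 z1 Ry (red_trans Hy0 B2).
    exists z2; split; [exact: red_trans B1 B4 | exact: B3].
Qed.

Lemma cr x y : Pi2_eq x y -> exists z, red x z /\ red y z.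
Proof.
elim => {x y}.
- move=> x y S; exists y; split; [exact: red_step S (red_refl _) | exact: red_refl].
- move=> x; exists x; split; exact: red_refl.
- move=> x y _ [z [A1 A2]]; by exists z.
- move=> x y z _ [z1 [A1 A2]] _ [z2 [A3 A4]].
  have [z3 [B1 B2]] := confl (ltnSn (size y)) A2 A3.
  exists z3; split; [exact: red_trans A1 B1 | exact: red_trans A4 B2].
Qed.

Lemma no_step w' : ~ T2step [::] w'.
Proof. by move=> H; have := step_size H. Qed.

Lemma red_nil w z : red w z -> w = [::] -> z = [::].
Proof.
case=> [//|w0 w' z0 S _ E]. rewrite E in S. by case: (no_step S).
Qed.

Lemma pi_red w : Pi2_eq w [::] -> red w [::].
Proof.
move=> H; have [z [H1 H2]] := cr H. by rewrite (red_nil H2 erefl) in H1.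
Qed.

Definition swap l := match l with La => Lc | Lb => Lb | Lc => La end.
Definition mirror (w : word) : word := rev (map swap w).

Lemma mirror_cat x y : mirror (x ++ y) = mirror y ++ mirror x.
Proof. by rewrite /mirror map_cat rev_cat. Qed.

Lemma mirror_lam i : mirror (lam i) = lam i.
Proof.
rewrite /mirror /lam /= map_cat map_nseq /= rev_cons rev_cat rev_nseq /=.
by rewrite -cats1.
Qed.

Lemma swapK : forall l, swap (swap l) = l. Proof. by case. Qed.

Lemma mirror_mirror w : mirror (mirror w) = w.
Proof.
rewrite /mirror map_rev revK -map_comp.
rewrite (eq_map (g := id)); first by rewrite map_id.
exact: swapK.
Qed.

Lemma mirror_relw i : mirror (relw i) = relw i.
Proof. by rewrite /relw mirror_cat mirror_lam. Qed.

Lemma mirror_step x y : T2step x y -> T2step (mirror x) (mirror y).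
Proof.
case=> p q i Hi; rewrite (mirror_cat p) (mirror_cat (relw i)) (mirror_cat p q) mirror_relw -(catA (mirror q)); exact: T2step_intro.
Qed.

Lemma mirror_eq x y : Pi2_eq x y -> Pi2_eq (mirror x) (mirror y).
Proof.
elim => {x y}.
- move=> x y S; apply: rst_step; exact: mirror_step.
- move=> x; exact: rst_refl.
- move=> x y _ H; exact: rst_sym.
- move=> x y z _ H1 _ H2; exact: rst_trans H1 H2.
Qed.

Lemma mirror_irr u : T2_irreducible u -> T2_irreducible (mirror u).
Proof.
move=> H [p [q [i [Hi E]]]]; apply: H; exists (mirror q), (mirror p), i; split => //.
by rewrite -(mirror_mirror u) E (mirror_cat p) (mirror_cat (relw i)) mirror_relw -(catA (mirror q)).
Qed.

Lemma Xs_mirror w : Xs w -> Ys (mirror w).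
Proof.
elim => [|i w1 Hi Hw IH|k w1 Hw IH].
- exact: Y0.
- rewrite mirror_cat mirror_lam; apply: Ys_cat IH _.
  have := @Ylam i [::] Hi Y0; by rewrite cats0.
- rewrite -cat_cons mirror_cat; apply: Ys_cat IH _.
  have -> : mirror (La :: nseq k Lb) = nseq k Lb ++ [:: Lc].
    by rewrite /mirror /= map_nseq /= rev_cons rev_nseq cats1.
  exact: (@Ybc k [::] Y0).
Qed.

Lemma Xs_head w : Xs w -> w = [::] \/ exists s, w = La :: s.
Proof. case; [by left | move=> i w0 _ _; right; by eexists | move=> k w0 _; right; by eexists]. Qed.

Lemma LC j w' k w : nseq j Lb ++ Lc :: w' = nseq k Lb ++ w ->
  (w = [::] \/ exists s, w = La :: s) -> False.
Proof.
elim: k j => [|k IH] [|j] /= E Hw.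
- by case: Hw E => [->|[s ->]].
- by case: Hw E => [->|[s ->]].
- by case: E.
- case: E => E; exact: IH E Hw.
Qed.

Lemma XY_lam u : Xs u -> Ys u -> in_Lambda_star u.
Proof.
elim => [|i w Hi Hw IH|k w Hw IH] Hy.
- by exists [::].
- move: Hy; move Eu: (lam i ++ w) => u' Hy; case: Hy Eu => [|j w' Hj Hw'|k w' Hw'] Eu.
  + discriminate.
  + have [Eij Ew] := lam_inj Eu. subst.
    have [ns [Hns ->]] := IH Hw'. exists (j :: ns); split => //=. by rewrite Hi Hns.
  + by case: k Eu.
- move: Hy; move Eu: (La :: nseq k Lb ++ w) => u' Hy; case: Hy Eu => [|j w' Hj Hw'|k' w' Hw'] Eu.
  + discriminate.
  + exfalso. move: Eu; rewrite /lam /= -catA /= => [[]] Eu.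
    exact: LC (esym Eu) (Xs_head Hw).
  + by case: k' Eu.
Qed.

Theorem mainTheorem7 (u : word) :
  T2_irreducible u -> invertible_Pi2 u -> in_Lambda_star u.
Proof.
move=> Hirr [v [H1 H2]].
have HX : Xs u.
  apply: (inv_red Hirr (pi_red H1) erefl (r := u) (y := [::]) (t := v)) => //.
  - by rewrite cats0.
  - exact: X0.
have HXm : Xs (mirror u).
  have H3 := mirror_eq H2. rewrite mirror_cat in H3.
  apply: (inv_red (mirror_irr Hirr) (pi_red H3) erefl (r := mirror u) (y := [::]) (t := mirror v)) => //.
  - by rewrite cats0.
  - exact: X0.
have HY : Ys u by rewrite -(mirror_mirror u); exact: Xs_mirror.
exact: XY_lam.
Qed.
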